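(* Let $n \in \mathbb{N}_0$, and let $P(x), Q(x) \in \mathbb{Z}[x]$ be $n$-good polynomials. If $P(x) \equiv Q(x) \pmod 2$, then $P(x) \equiv Q(x) \pmod{2^{n+1}}$.
   Context: For $P, Q, M \in \mathbb{Z}[x]$ with $M \ne 0$, $P \equiv Q \pmod{M}$ means $M$ divides $P - Q$ in $\mathbb{Z}[x]$. For $n \in \mathbb{N}_0$, a polynomial $P(x) \in \mathbb{Z}[x]$ is $n$-good if $P(x^{2^m}) \equiv P(x)^{2^m} \pmod{2^{m+1}}$ for every $m \in \{0, 1, \dots, n\}$. *)

(* Defs.v *)
From mathcomp Require Import all_boot all_order all_algebra.
Set Implicit Arguments. Unset Strict Implicit. Unset Printing Implicit Defensive.
Import GRing.Theory Num.Theory.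
Local Open Scope ring_scope.

Definition zpoly_dvd (M P : {poly int}) : Prop := exists R : {poly int}, P = M * R.

Definition zpoly_congr (P Q M : {poly int}) : Prop := zpoly_dvd M (P - Q).

Definition n_good (n : nat) (P : {poly int}) : Prop :=
  forall m : nat, (m <= n)%N ->
    zpoly_congr (P \Po 'X^(2 ^ m)) (P ^+ (2 ^ m)) ((2 ^ m.+1)%:Z)%:P.

(* Main.v *)
Require Import Defs.
From mathcomp Require Import all_boot all_order all_algebra.
From mathcomp Require Import ring.
Import GRing.Theory Num.Theory.
Local Open Scope ring_scope.

Lemma cP k : ((2 ^ k.+1)%:Z)%:P = 2 * ((2 ^ k)%:Z)%:P :> {poly int}.
Proof. rewrite expnS PoszM rmorphM /=; congr (_ * _); exact: (polyC_natr _ 2). Qed.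

Lemma pow_lem (A B : {poly int}) k :
  zpoly_dvd (2%:Z)%:P (A - B) ->
  zpoly_dvd ((2 ^ k.+1)%:Z)%:P (A ^+ (2 ^ k) - B ^+ (2 ^ k)).
Proof.
move=> H; elim: k => [|k [R HR]]; first by rewrite expn0 !expr1.
rewrite [(2 ^ k.+1)%N]expnS mulnC !exprM.
set a := A ^+ (2 ^ k) in HR *; set b := B ^+ (2 ^ k) in HR *.
have -> : a = b + ((2 ^ k.+1)%:Z)%:P * R by rewrite -HR; ring.
exists (R * (R * ((2 ^ k)%:Z)%:P + b)).
rewrite !cP; set t := ((2 ^ k)%:Z)%:P; ring.
Qed.

Lemma descent (D S : {poly int}) (c : int) N : (0 < N)%N -> c != 0 ->
  D \Po 'X^N = c%:P * S -> zpoly_dvd c%:P D.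
Proof.
move=> N0 c0 H; exists (\poly_(i < size D) (D`_i %/ c)%Z).
apply/polyP => i; rewrite coefCM coef_poly.
case: ifP => hi; last by rewrite mulr0 nth_default // leqNgt hi.
have : (D \Po 'X^N)`_(i * N) = D`_i by rewrite coef_comp_poly_Xn // (dvdn_mull i (dvdnn N)) mulnK.
rewrite H coefCM => <-; by rewrite [X in (X %/ c)%Z]mulrC mulzK.
Qed.

Theorem lemma3p6 (n : nat) (P Q : {poly int}) :
  n_good n P -> n_good n Q ->
  zpoly_congr P Q (2%:Z)%:P ->
  zpoly_congr P Q ((2 ^ n.+1)%:Z)%:P.
Proof.
move=> HP HQ H2.
have [R1 E1] := HP n (leqnn n).
have [R2 E2] := HQ n (leqnn n).
have [R3 E3] := @pow_lem _ _ n H2.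
apply: (@descent _ (R1 - R2 + R3) _ (2 ^ n)); first by rewrite expn_gt0.
  by rewrite eqz_nat expn_eq0.
have -> : (P - Q) \Po 'X^(2 ^ n) = (P \Po 'X^(2 ^ n) - P ^+ (2 ^ n))
   - (Q \Po 'X^(2 ^ n) - Q ^+ (2 ^ n)) + (P ^+ (2 ^ n) - Q ^+ (2 ^ n)).
  rewrite linearB /=; ring.
rewrite E1 E2 E3; ring.
Qed.
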